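(* Let $F$ be a CNF formula over variables $x_1,\dots,x_n$ with clauses $C_1,\dots,C_m$ of two or three literals each. Let $R$ be the triple set and $H=(V,A)$ the hypergraph constructed from $F$ as described in the context. If $P\subseteq A$ is an acyclic path in $H$ from $\alpha\beta$ to $c_{m+1}\gamma$, then $\mathrm{triples}(P)$ entails $\alpha\beta|\gamma$; that is, every rooted binary tree displaying all triples of $\mathrm{triples}(P)$ also displays $\alpha\beta|\gamma$.
   Context: **Triples and trees.** A rooted triple $pq|o$, with $p,q,o$ distinct leaves and unordered in $p,q$, is displayed by a rooted binary tree $T$ (leaf set containing $p,q,o$) if the path from $p$ to $q$ is node-disjoint from the path from $o$ to the root. **Triples and arcs.** The triple $pq|o$ corresponds to the hyperarc $\mathrm{arc}(pq|o)=\{p,q\}\to\{\{p,o\},\{q,o\}\}$, and $\mathrm{triples}(P)$ is the set of triples corresponding to the arcs of $P$. We write $pq$ for the node $\{p,q\}$. **Hypergraph notions.** A hyperarc $u\to\{v,v'\}$ has tail $u$ and heads $\{v,v'\}$. A path from $u_0$ to $u_\ell$ is a sequence of distinct arcs $(a_1,\dots,a_\ell)$ with $\mathrm{t}(a_1)=u_0$, $u_\ell\in\mathrm{h}(a_\ell)$, and $\mathrm{t}(a_{k+1})\in\mathrm{h}(a_k)$ for all $k$. It is acyclic if no $a_k$ has a head equal to $\mathrm{t}(a_{k'})$ with $k'<k$. **Construction.** Use leaves - $x_i^j,\bar x_i^j,y_i^j,\bar y_i^j$ for $i\in[n]$, $j\in[m]$; - $b_i,b'_i$ for $i\in[n+1]$;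 - $c_j,d_j$ for $j\in[m]$; - $c_{m+1}$, and $\alpha,\beta,\gamma$. The triple set $R$ is the union of the following groups. (i) For each $i\in[n]$: - $b_ib'_i|x_i^1$ and $b'_ix_i^1|y_i^1$; - $x_i^jy_i^j|x_i^{j+1}$ and $y_i^jx_i^{j+1}|y_i^{j+1}$ for $1\le j\le m-1$; - $x_i^my_i^m|b_{i+1}$ and $y_i^mb_{i+1}|b'_{i+1}$. (ii) For each $i\in[n]$: - $b_ib'_i|\bar x_i^1$ and $b'_i\bar x_i^1|\bar y_i^1$; - $\bar x_i^j\bar y_i^j|\bar x_i^{j+1}$ and $\bar y_i^j\bar x_i^{j+1}|\bar y_i^{j+1}$ for $1\le j\le m-1$; - $\bar x_i^m\bar y_i^m|b_{i+1}$ and $\bar x_i^mb_{i+1}|b'_{i+1}$. (iii) For each clause $C_j$: - for each positive occurrence of $x_i$ in $C_j$, the triples $c_jd_j|x_i^j$, $c_jx_i^j|y_i^j$, $c_jy_i^j|c_{j+1}$; - for each negative occurrence of $x_i$ in $C_j$, the same triples with $\bar x_i^j,\bar y_i^j$ in place of $x_i^j,y_i^j$; - if $j<m$, the triple $c_jc_{j+1}|d_{j+1}$. (iv) Connecting triples: $\alpha\beta|b_1$, $\beta b_1|b'_1$, $b_{n+1}b'_{n+1}|c_1$, $b'_{n+1}c_1|d_1$, $c_mc_{m+1}|\gamma$. Then $A=\{\mathrm{arc}(t):t\in R\}$, and $V$ is the set of leaf pairs occurring in arcs of $A$. *)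

(* Defs.v *)
From HB Require Import structures.
From mathcomp Require Import all_boot.
From mathcomp Require Import finmap.

Set Implicit Arguments.
Unset Strict Implicit.
Unset Printing Implicit Defensive.

Local Open Scope fset_scope.

(* Leaves of the construction.  Indices are natural numbers; the       *)
(* construction only uses i in [1..n+1], j in [1..m+1].                 *)
Inductive leaf :=
  | X (i j : nat)
  | Xb (i j : nat)
  | Y (i j : nat)
  | Yb (i j : nat)
  | B (i : nat)
  | B' (i : nat)
  | C (j : nat)
  | D (j : nat)
  | Alpha | Beta | Gamma.

Definition leaf_code (l : leaf) : nat * (nat * nat) :=
  match l with
  | X i j => (0, (i, j)) | Xb i j => (1, (i, j)) | Y i j => (2, (i, j))
  | Yb i j => (3, (i, j)) | B i => (4, (i, 0)) | B' i => (5, (i, 0))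
  | C j => (6, (j, 0)) | D j => (7, (j, 0))
  | Alpha => (8, (0, 0)) | Beta => (9, (0, 0)) | Gamma => (10, (0, 0))
  end.

Definition leaf_decode (c : nat * (nat * nat)) : option leaf :=
  match c with
  | (0, (i, j)) => Some (X i j) | (1, (i, j)) => Some (Xb i j)
  | (2, (i, j)) => Some (Y i j) | (3, (i, j)) => Some (Yb i j)
  | (4, (i, _)) => Some (B i) | (5, (i, _)) => Some (B' i)
  | (6, (j, _)) => Some (C j) | (7, (j, _)) => Some (D j)
  | (8, _) => Some Alpha | (9, _) => Some Beta | (10, _) => Some Gamma
  | _ => None
  end.

Lemma leaf_codeK : pcancel leaf_code leaf_decode.
Proof. by case. Qed.

HB.instance Definition _ := Countable.copy leaf (pcan_type leaf_codeK).

Inductive tree := Lf (l : leaf) | Nd (tl tr : tree).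

Fixpoint tleaves (t : tree) : seq leaf :=
  match t with Lf l => [:: l] | Nd t1 t2 => tleaves t1 ++ tleaves t2 end.

Definition rbtree (t : tree) : bool := uniq (tleaves t).

(* Nodes of a tree are addressed by their path from the root
   (false = left child, true = right child).  [leaf_at t a x]: the node
   at address [a] is a leaf labelled [x]. *)
Fixpoint leaf_at (t : tree) (a : seq bool) (x : leaf) : bool :=
  match t, a with
  | Lf y, [::] => y == x
  | Nd t1 _, false :: a' => leaf_at t1 a' x
  | Nd _ t2, true :: a' => leaf_at t2 a' x
  | _, _ => false
  end.

(* Longest common prefix = address of the lowest common ancestor. *)
Fixpoint lcp (a b : seq bool) : seq bool :=
  match a, b with
  | x :: a', y :: b' => if x == y then x :: lcp a' b' else [::]
  | _, _ => [::]
  end.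

(* w lies on the (unique) tree path between nodes a and b:
   w is an ancestor-or-self of a or of b, and a descendant-or-self of
   their lowest common ancestor. *)
Definition on_path (a b w : seq bool) : bool :=
  (prefix w a || prefix w b) && prefix (lcp a b) w.

Definition on_root_path (a w : seq bool) : bool := prefix w a.

Definition displays (t : tree) (p q o : leaf) : Prop :=
  [/\ p != q, p != o, q != o &
   exists ap aq ao,
     [/\ leaf_at t ap p, leaf_at t aq q, leaf_at t ao o &
      forall w, on_path ap aq w -> ~~ on_root_path ao w]].

Definition hnode := {fset leaf}.
Definition harc : Type := (hnode * {fset hnode})%type.

Definition tail (a : harc) : hnode := a.1.
Definition heads (a : harc) : {fset hnode} := a.2.

Definition arc (p q o : leaf) : harc :=
  ([fset p; q], [fset [fset p; o]; [fset q; o]]).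

Definition arc0 : harc := (fset0, fset0).

Definition is_hpath (P : seq harc) (u v : hnode) : Prop :=
  [/\ P != [::], uniq P, tail (nth arc0 P 0) = u,
      v \in heads (nth arc0 P (size P).-1) &
      forall k, k.+1 < size P ->
        tail (nth arc0 P k.+1) \in heads (nth arc0 P k)].

Definition acyclic_hpath (P : seq harc) : Prop :=
  forall k k', k' < k -> k < size P ->
    tail (nth arc0 P k') \notin heads (nth arc0 P k).

Definition entails (P : seq harc) (p q o : leaf) : Prop :=
  forall t : tree, rbtree t ->
    (forall p' q' o', [/\ p' != q', p' != o' & q' != o'] ->
       arc p' q' o' \in P -> displays t p' q' o') ->
    displays t p q o.

(* CNF formulas: a literal is (variable index, polarity) with         *)
(* polarity true = positive; clause C_j = nth [::] cls (j-1).           *)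
Definition literal := (nat * bool)%type.
Definition clause := seq literal.

Definition cnf_ok (n : nat) (cls : seq clause) : Prop :=
  forall c, c \in cls ->
    ((size c == 2) || (size c == 3)) /\
    (forall l, l \in c -> 1 <= l.1 <= n).

Definition clause_at (cls : seq clause) (j : nat) : clause := nth [::] cls j.-1.

Definition inR (n : nat) (cls : seq clause) (p q o : leaf) : Prop :=
  let m := size cls in
  let t := (p, q, o) in
  (exists i, 1 <= i <= n /\
     (t = (B i, B' i, X i 1) \/ t = (B' i, X i 1, Y i 1) \/
      (exists j, 1 <= j <= m - 1 /\
         (t = (X i j, Y i j, X i j.+1) \/ t = (Y i j, X i j.+1, Y i j.+1))) \/
      t = (X i m, Y i m, B i.+1) \/
      t = (Y i m, B i.+1, B' i.+1)))
  \/
  (exists i, 1 <= i <= n /\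
     (t = (B i, B' i, Xb i 1) \/ t = (B' i, Xb i 1, Yb i 1) \/
      (exists j, 1 <= j <= m - 1 /\
         (t = (Xb i j, Yb i j, Xb i j.+1) \/ t = (Yb i j, Xb i j.+1, Yb i j.+1))) \/
      t = (Xb i m, Yb i m, B i.+1) \/
      t = (Xb i m, B i.+1, B' i.+1)))
  \/
  (exists j, 1 <= j <= m /\
     ((exists i, (i, true) \in clause_at cls j /\
        [\/ t = (C j, D j, X i j), t = (C j, X i j, Y i j) | t = (C j, Y i j, C j.+1)])
      \/ (exists i, (i, false) \in clause_at cls j /\
        [\/ t = (C j, D j, Xb i j), t = (C j, Xb i j, Yb i j) | t = (C j, Yb i j, C j.+1)])
      \/ (j < m /\ t = (C j, C j.+1, D j.+1))))
  \/
  (t = (Alpha, Beta, B 1) \/ t = (Beta, B 1, B' 1) \/ t = (B n.+1, B' n.+1, C 1) \/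
   t = (B' n.+1, C 1, D 1) \/ t = (C m, C m.+1, Gamma)).

Definition inA (n : nat) (cls : seq clause) (a : harc) : Prop :=
  exists p q o, inR n cls p q o /\ a = arc p q o.

(* Main.v *)
Require Import Defs.
From HB Require Import structures.
From mathcomp Require Import all_boot.
From mathcomp Require Import finmap.
From Stdlib Require Import Lia.

Set Implicit Arguments.
Local Open Scope fset_scope.

Lemma prefix_cmp (a b c : seq bool) : prefix a c -> prefix b c -> prefix a b || prefix b a.
Proof.
elim: c a b => [|x c IH] [|y a] [|z b] //=.
move=> /andP[/eqP -> Ha] /andP[/eqP -> Hb]; rewrite eqxx /=; exact: IH.
Qed.

Lemma lcp_l a b : prefix (lcp a b) a.
Proof. elim: a b => [|x a IH] [|y b] //=; case: eqP => //= _; rewrite eqxx; exact: IH. Qed.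

Lemma lcp_r a b : prefix (lcp a b) b.
Proof. elim: a b => [|x a IH] [|y b] //=; case: eqP => //= ->; rewrite eqxx; exact: IH. Qed.

Lemma lcp_max z a b : prefix z a -> prefix z b -> prefix z (lcp a b).
Proof.
elim: a b z => [|x a IH] [|y b] [|w z] //=; first by rewrite prefix0s.
by move=> /andP[/eqP <- Ha] /andP[/eqP <- Hb]; rewrite eqxx /= eqxx; exact: IH.
Qed.

Lemma leaf_at_mem t a x : leaf_at t a x -> x \in tleaves t.
Proof.
elim: t a => [l|t1 IH1 t2 IH2] [|[] a] //=.
- by move/eqP->; rewrite inE.
- by move/IH2; rewrite mem_cat orbC => ->.
- by move/IH1; rewrite mem_cat => ->.
Qed.

Lemma leaf_at_uniq t a b x : uniq (tleaves t) -> leaf_at t a x -> leaf_at t b x -> a = b.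
Proof.
elim: t a b => [l|t1 IH1 t2 IH2] [|[] a] [|[] b] //=; rewrite ?cat_uniq.
- by move=> /and3P[_ _ u] H1 H2; rewrite (IH2 _ _ u H1 H2).
- move=> /and3P[_ d _] H1 H2; move: d => /hasPn /(_ _ (leaf_at_mem _ _ _ H1)).
  by rewrite /= (leaf_at_mem _ _ _ H2).
- move=> /and3P[_ d _] H1 H2; move: d => /hasPn /(_ _ (leaf_at_mem _ _ _ H2)).
  by rewrite /= (leaf_at_mem _ _ _ H1).
- by move=> /and3P[u _ _] H1 H2; rewrite (IH1 _ _ u H1 H2).
Qed.

Arguments leaf_at_uniq {t a b x}.
Arguments prefix_cmp {a b c}.
Arguments lcp_max {z a b}.
Lemma ptrans (a b c : seq bool) : prefix a b -> prefix b c -> prefix a c.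
Proof. move=> H1 H2; exact: prefix_trans H1 H2. Qed.
Arguments ptrans {a b c}.

Lemma inR_props n cls p q o : inR n cls p q o ->
  [/\ p != q, p != o, q != o, p != Gamma & q != Gamma].
Proof.
rewrite /inR /= => H.
decompose [or and ex or3] H; clear H;
repeat match goal with E : (_, _, _) = (_, _, _) |- _ =>
  injection E as E1 E2 E3; subst end;
split; apply/eqP => E; (discriminate || (injection E; lia)).
Qed.

Definition anc (t : tree) (z : seq bool) (x : leaf) := exists a, leaf_at t a x /\ prefix z a.
Definition Inv (t : tree) (u : hnode) :=
  forall z, (forall x, x \in u -> anc t z x) -> anc t z Alpha /\ anc t z Beta.

Lemma memK2 (K : choiceType) (p q x : K) : (x \in [fset p; q]) = (x == p) || (x == q).
Proof. by rewrite !inE. Qed.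

Lemma mem2 (p q x : leaf) : (x \in [fset p; q]) = (x == p) || (x == q).
Proof. by rewrite !inE. Qed.

Lemma step t p q o : rbtree t -> displays t p q o -> Inv t [fset p; q] ->
  Inv t [fset p; o] /\ Inv t [fset q; o].
Proof.
move=> rbt [_ _ _ [ap [aq [ao [Hp Hq Ho Hw]]]]] Hi.
have HL : ~~ prefix (lcp ap aq) ao.
  by have := Hw (lcp ap aq); rewrite /on_path /on_root_path lcp_l prefix_refl /=; apply.
split=> z Hz; apply: Hi => x; rewrite mem2 => /orP[]/eqP->.
- by apply: Hz; rewrite mem2 eqxx.
- have [a1 [H1 P1]] : anc t z p by apply: Hz; rewrite mem2 eqxx.
  have [a3 [H3 P3]] : anc t z o by apply: Hz; rewrite mem2 eqxx orbT.
  rewrite (leaf_at_uniq rbt H1 Hp) in P1; rewrite (leaf_at_uniq rbt H3 Ho) in P3.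
  exists aq; split=> //.
  case/orP: (prefix_cmp P1 (lcp_l ap aq)) => C.
  + exact: ptrans C (lcp_r _ _).
  + by move: HL; rewrite (ptrans C P3).
- have [a1 [H1 P1]] : anc t z q by apply: Hz; rewrite mem2 eqxx.
  have [a3 [H3 P3]] : anc t z o by apply: Hz; rewrite mem2 eqxx orbT.
  rewrite (leaf_at_uniq rbt H1 Hq) in P1; rewrite (leaf_at_uniq rbt H3 Ho) in P3.
  exists ap; split=> //.
  case/orP: (prefix_cmp P1 (lcp_r ap aq)) => C.
  + exact: ptrans C (lcp_l _ _).
  + by move: HL; rewrite (ptrans C P3).
- by apply: Hz; rewrite mem2 eqxx.
Qed.

Lemma final t p q : rbtree t -> displays t p q Gamma -> Inv t [fset p; q] ->
  displays t Alpha Beta Gamma.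
Proof.
move=> rbt [_ _ _ [ap [aq [ao [Hp Hq Ho Hw]]]]] Hi.
have HL : ~~ prefix (lcp ap aq) ao.
  by have := Hw (lcp ap aq); rewrite /on_path /on_root_path lcp_l prefix_refl /=; apply.
have [[aa [Ha _]] [ab [Hb _]]] : anc t [::] Alpha /\ anc t [::] Beta.
  apply: Hi => x; rewrite mem2 => /orP[]/eqP->.
  - by exists ap; rewrite prefix0s.
  - by exists aq; rewrite prefix0s.
have [[a1 [H1 P1]] [a2 [H2 P2]]] : anc t (lcp ap aq) Alpha /\ anc t (lcp ap aq) Beta.
  apply: Hi => x; rewrite mem2 => /orP[]/eqP->.
  - by exists ap; rewrite lcp_l.
  - by exists aq; rewrite lcp_r.
rewrite (leaf_at_uniq rbt H1 Ha) in P1; rewrite (leaf_at_uniq rbt H2 Hb) in P2.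
split=> //; exists aa, ab, ao; split=> // w /andP[_ Hw2]; apply/negP => Hwo.
move: HL; rewrite (ptrans (lcp_max P1 P2) (ptrans Hw2 Hwo)) //.
Qed.

Theorem lemma3 (n : nat) (cls : seq clause) (P : seq harc) :
  cnf_ok n cls -> 0 < size cls ->
  (forall a, a \in P -> inA n cls a) ->
  is_hpath P [fset Alpha; Beta] [fset C (size cls).+1; Gamma] ->
  acyclic_hpath P ->
  entails P Alpha Beta Gamma.
Proof.
move=> _ _ HA [Pn0 _ H0 Hlast Hstep] _ t rbt Hdisp.
have Harc : forall k, k < size P -> exists p q o,
    [/\ nth arc0 P k = Defs.arc p q o, inR n cls p q o & displays t p q o].
  move=> k Hk; have [p [q [o [HR Ea]]]] := HA _ (mem_nth arc0 Hk).
  have [pq po qo _ _] := inR_props HR.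
  exists p, q, o; split=> //; apply: Hdisp; first by split.
  by rewrite -Ea mem_nth.
have Hinv : forall k, k < size P -> Inv t (tail (nth arc0 P k)).
  elim=> [|k IH] Hk.
    rewrite H0 => z Hz; split; apply: Hz; by rewrite mem2 eqxx ?orbT.
  have Hk' : k < size P by apply: ltnW.
  have [p [q [o [Ea HR D]]]] := Harc k Hk'.
  have := Hstep k Hk; rewrite Ea /heads /= => Hh.
  have := IH Hk'; rewrite Ea /tail /= => Hi.
  have [S1 S2] := step rbt D Hi.
  by move: Hh; rewrite memK2 => /orP[]/eqP E; [move: S1 | move: S2]; rewrite -E; apply.
have Hs : (size P).-1 < size P by rewrite prednK // lt0n size_eq0.
have [p [q [o [Ea HR D]]]] := Harc _ Hs.
have [_ _ _ pG qG] := inR_props HR.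
have := Hinv _ Hs; rewrite Ea /tail /= => Hi.
move: Hlast; rewrite Ea /heads /= memK2 => Hh.
have oG : o = Gamma.
  case/orP: Hh => /eqP E.
  - have : Gamma \in [fset p; o] by rewrite -E mem2 eqxx orbT.
    by rewrite mem2 eq_sym (negbTE pG) /= => /eqP.
  - have : Gamma \in [fset q; o] by rewrite -E mem2 eqxx orbT.
    by rewrite mem2 eq_sym (negbTE qG) /= => /eqP.
by subst o; apply: final D Hi.
Qed.
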